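(* Let $p$ be a prime, let $\boldsymbol{\alpha}=(\alpha_1,\ldots,\alpha_r)$ be a basis for a finite abelian $p$-group $G$, and let $j,j',k',k$ be integers with $0\le j\le j'<k'\le k$. Let $\beta\in G(j,k)$. Then: (i) If $\mathbf{x}={\rm DL}_{\boldsymbol{\alpha}}(k',k,\beta^{p^{k'-j}})$ and $\gamma=\beta^{p^{j'-j}}\boldsymbol{\alpha}(j',k)^{-\mathbf{x}}$, then $\gamma\in G(j',k')$. (ii) If moreover $\mathbf{v}={\rm DL}_{\boldsymbol{\alpha}}(j',k',\gamma)$ and $\mathbf{s}=\mathbf{q}(j',k')/\mathbf{q}(j',k)$ (componentwise quotient), then $\mathbf{s}\mathbf{v}+\mathbf{x}={\rm DL}_{\boldsymbol{\alpha}}(j',k,\beta^{p^{j'-j}})$.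
   Context: A vector $\boldsymbol{\gamma}=(\gamma_1,\ldots,\gamma_s)$ of group elements (trivial entries allowed) is a basis for $\langle\boldsymbol{\gamma}\rangle$ if every $\beta\in\langle\boldsymbol{\gamma}\rangle$ can be written uniquely as $\boldsymbol{\gamma}^{\mathbf{x}}=\gamma_1^{x_1}\cdots\gamma_s^{x_s}$ with $0\le x_i<|\gamma_i|$; then ${\rm DL}(\boldsymbol{\gamma},\beta)=\mathbf{x}$, regarded as an element of $R_{\boldsymbol{\gamma}}=\prod_i\mathbb{Z}/|\gamma_i|\mathbb{Z}$ (integer vectors are identified with their reductions; exponentiation by an element of $R_{\boldsymbol{\gamma}}$ uses representatives). For nonnegative integers $a<b$: $G(a,b)=\{\beta^{p^a}:\beta\in G,\ \beta^{p^b}=1_G\}$; with $n_i=\log_p|\alpha_i|$ and $q_i=p^{\,a+\max(0,n_i-b)}$, $\mathbf{q}(a,b)=(q_1,\ldots,q_r)$ and $\boldsymbol{\alpha}(a,b)=(\alpha_1^{q_1},\ldots,\alpha_r^{q_r})$ (a basis of $G(a,b)$); ${\rm DL}_{\boldsymbol{\alpha}}(a,b,\delta)$ denotes ${\rm DL}(\boldsymbol{\alpha}(a,b),\delta)$ for $\delta\in G(a,b)$. Vector products such as $\mathbf{s}\mathbf{v}$ are componentwise. *)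

(* Defs.v *)
From mathcomp Require Import all_boot all_fingroup all_solvable.
Set Implicit Arguments. Unset Strict Implicit. Unset Printing Implicit Defensive.
Local Open Scope group_scope.

Section Defs.
Variable gT : finGroupType.

Definition vexp (r : nat) (g : 'I_r -> gT) (x : 'I_r -> nat) : gT :=
  \prod_(i < r) (g i ^+ x i).

Definition vexpN (r : nat) (g : 'I_r -> gT) (x : 'I_r -> nat) : gT :=
  \prod_(i < r) (g i ^+ x i)^-1.

Definition is_basis (r : nat) (g : 'I_r -> gT) : Prop :=
  forall b, b \in <<[set g i | i : 'I_r]>> ->
    (exists x : 'I_r -> nat, (forall i, x i < #[g i])%N /\ vexp g x = b) /\
    (forall x y : 'I_r -> nat, (forall i, x i < #[g i])%N -> (forall i, y i < #[g i])%N ->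
        vexp g x = b -> vexp g y = b -> forall i, x i = y i).

(* DL(g, b): the representative vector x (0 <= x_i < |g_i|) with g^x = b;
   (the zero vector if no such x exists, i.e. outside its domain). *)
Definition DL (r : nat) (g : 'I_r -> gT) (b : gT) : 'I_r -> nat :=
  let N := (\max_(i < r) #[g i])%N in
  match [pick x : {ffun 'I_r -> 'I_N} |
           [forall i, (x i < #[g i])%N] && (vexp g (fun i => nat_of_ord (x i)) == b)] with
  | Some x => fun i => nat_of_ord (x i)
  | None => fun _ => 0%N
  end.

Definition Gab (p a b : nat) (G : {set gT}) : {set gT} :=
  [set y ^+ (p ^ a)%N | y in [set z in G | z ^+ (p ^ b)%N == 1]].

Definition qab (p : nat) (r : nat) (alpha : 'I_r -> gT) (a b : nat) (i : 'I_r) : nat :=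
  (p ^ (a + (logn p #[alpha i] - b)))%N.

Definition alphab (p : nat) (r : nat) (alpha : 'I_r -> gT) (a b : nat) (i : 'I_r) : gT :=
  alpha i ^+ qab p alpha a b i.

End Defs.

(* Main.v *)
Require Import Defs.
From mathcomp Require Import all_boot all_fingroup all_solvable.
Local Open Scope group_scope.
Section H.
Variables (gT : finGroupType) (G : {group gT}).
Hypothesis abG : abelian G.

Lemma commG x y : x \in G -> y \in G -> commute x y.
Proof. by move=> hx hy; apply: (centsP abG x hx y hy). Qed.

Lemma prod_inG (I : Type) (s : seq I) (f : I -> gT) :
  (forall i, f i \in G) -> \prod_(i <- s) f i \in G.
Proof. by move=> H; apply: group_prod => i _; apply: H. Qed.

Lemma prod_mul (I : Type) (s : seq I) (f g : I -> gT) :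
  (forall i, f i \in G) -> (forall i, g i \in G) ->
  \prod_(i <- s) (f i * g i) = \prod_(i <- s) f i * \prod_(i <- s) g i.
Proof.
move=> Hf Hg; elim: s => [|a s IH]; first by rewrite !big_nil mulg1.
rewrite !big_cons IH !mulgA; congr (_ * _); rewrite -!mulgA; congr (_ * _).
by apply: commG => //; apply: prod_inG.
Qed.

Lemma prod_exp (I : Type) (s : seq I) (f : I -> gT) m :
  (forall i, f i \in G) ->
  \prod_(i <- s) (f i ^+ m) = (\prod_(i <- s) f i) ^+ m.
Proof.
move=> Hf; elim: s => [|a s IH]; first by rewrite !big_nil expg1n.
rewrite !big_cons IH expgMn //; apply: commG => //; exact: prod_inG.
Qed.

Lemma prod_inv (I : Type) (s : seq I) (f : I -> gT) :
  (forall i, f i \in G) ->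
  \prod_(i <- s) (f i)^-1 = (\prod_(i <- s) f i)^-1.
Proof.
move=> Hf; apply/eqP; rewrite eq_sym eq_invg_mul -prod_mul //; last by move=> i; rewrite groupV.
by apply/eqP; apply: big1 => i _; rewrite mulgV.
Qed.

End H.

Section V.
Variables (gT : finGroupType).

Lemma DL_spec r (g : 'I_r -> gT) (x : 'I_r -> nat) b :
  vexp g x = b -> vexp g (DL g b) = b.
Proof.
move=> Hb.
pose N := (\max_(i < r) #[g i])%N.
have Hlt : forall i, (x i %% #[g i] < N)%N.
  by move=> i; apply: leq_trans (leq_bigmax i); rewrite ltn_pmod.
pose z : {ffun 'I_r -> 'I_N} := [ffun i => Ordinal (Hlt i)].
rewrite /DL; case: pickP => [y /andP[_ /eqP //] | H].
move: (H z) => /negbT; rewrite negb_and => /orP[].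
  by move/forallPn => [i]; rewrite ffunE /= ltn_pmod.
rewrite -Hb /vexp; under eq_bigr => i _ do rewrite ffunE /= expg_mod_order.
by rewrite eqxx.
Qed.

End V.
Section M.
Variables (gT : finGroupType) (G : {group gT}) (p r : nat) (alpha : 'I_r -> gT).
Hypotheses (pr : prime p) (abG : abelian G) (pG : p.-group G)
  (HA : <<[set alpha i | i : 'I_r]>> = G) (bas : is_basis alpha).

Lemma alphaG i : alpha i \in G.
Proof. by rewrite -HA; apply: mem_gen; apply/imsetP; exists i. Qed.

Lemma vexpG (e : 'I_r -> nat) : vexp alpha e \in G.
Proof. by apply: prod_inG => i; rewrite groupX ?alphaG. Qed.

Lemma vexp_mul e f : vexp alpha e * vexp alpha f = vexp alpha (fun i => e i + f i)%N.
Proof.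
rewrite /vexp -(@prod_mul _ G abG) //; last by move=> i; rewrite groupX ?alphaG.
  by apply: eq_bigr => i _; rewrite expgD.
by move=> i; rewrite groupX ?alphaG.
Qed.

Lemma vexp_exp e m : vexp alpha e ^+ m = vexp alpha (fun i => e i * m)%N.
Proof.
rewrite /vexp -(@prod_exp _ G abG) //; last by move=> i; rewrite groupX ?alphaG.
by apply: eq_bigr => i _; rewrite expgM.
Qed.

Lemma vexp_pow (q x : 'I_r -> nat) :
  vexp (fun i => alpha i ^+ q i) x = vexp alpha (fun i => q i * x i)%N.
Proof. by apply: eq_bigr => i _; rewrite expgM. Qed.

Lemma vexp0 : vexp alpha (fun _ => 0%N) = 1.
Proof. by apply: big1 => i _; rewrite expg0. Qed.

Lemma vexp_indep e f : vexp alpha e = vexp alpha f ->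
  forall i, alpha i ^+ e i = alpha i ^+ f i.
Proof.
move=> Hef i.
have Hm : forall e, vexp alpha (fun i => e i %% #[alpha i])%N = vexp alpha e.
  by move=> e'; apply: eq_bigr => k _; rewrite expg_mod_order.
have Hin : vexp alpha e \in <<[set alpha i | i : 'I_r]>> by rewrite HA vexpG.
have [_ U] := bas _ Hin.
have := U (fun i => e i %% #[alpha i])%N (fun i => f i %% #[alpha i])%N.
move=> /(_ (fun k => ltn_pmod _ (order_gt0 _)) (fun k => ltn_pmod _ (order_gt0 _))).
move=> /(_ (Hm e) (etrans (Hm f) (esym Hef)) i) E.
by rewrite -expg_mod_order E expg_mod_order.
Qed.

Lemma ordA i : #[alpha i] = (p ^ logn p #[alpha i])%N.
Proof.
rewrite -p_part part_pnat_id //.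
exact: (mem_p_elt pG (alphaG i)).
Qed.

Lemma rep a b w : w \in G -> w ^+ (p ^ b)%N = 1 ->
  exists c, w ^+ (p ^ a)%N = vexp (alphab p alpha a b) c.
Proof.
move=> wG wb.
have Hin : w \in <<[set alpha i | i : 'I_r]>> by rewrite HA.
have [[c [_ Hc]] _] := bas _ Hin.
have D : forall i, (p ^ (logn p #[alpha i] - b) %| c i)%N.
  move=> i.
  have : alpha i ^+ (c i * p ^ b)%N = alpha i ^+ 0%N.
    apply: (@vexp_indep (fun i => c i * p ^ b)%N (fun _ => 0%N)).
    by rewrite -vexp_exp Hc wb vexp0.
  rewrite expg0 => /eqP; rewrite -order_dvdn {1}ordA.
  set n := logn p #[alpha i].
  case: (leqP n b) => hl.
    by move=> _; move: hl; rewrite -subn_eq0 => /eqP ->; rewrite dvd1n.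
  rewrite -{1}(subnK (ltnW hl)) expnD dvdn_pmul2r //.
  by rewrite expn_gt0 prime_gt0.
exists (fun i => c i %/ p ^ (logn p #[alpha i] - b))%N.
rewrite -Hc vexp_exp /alphab vexp_pow; apply: eq_bigr => i _.
by rewrite /qab expnD -mulnA [X in (p ^ a * X)%N]mulnC divnK // mulnC.
Qed.


Lemma main (j j' k' k : nat) (beta : gT) :
  (j <= j')%N -> (j' < k')%N -> (k' <= k)%N ->
  beta \in Gab p j k G ->
  let x := DL (alphab p alpha k' k) (beta ^+ (p ^ (k' - j))%N) in
  let gamma := beta ^+ (p ^ (j' - j))%N * vexpN (alphab p alpha j' k) x in
  gamma \in Gab p j' k' G /\
  (let v := DL (alphab p alpha j' k') gamma in
   let s := fun i => (qab p alpha j' k' i %/ qab p alpha j' k i)%N in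
   forall i : 'I_r,
     (s i * v i + x i = DL (alphab p alpha j' k) (beta ^+ (p ^ (j' - j))%N) i
       %[mod #[alphab p alpha j' k i]])%N).
Proof.
move=> hjj hjk hkk /imsetP[y]; rewrite inE => /andP[yG /eqP yk] ->.
move=> x gamma.
have Ey : forall m, (j <= m)%N -> (y ^+ (p ^ j)) ^+ (p ^ (m - j)) = y ^+ (p ^ m).
  by move=> m hm; rewrite -expgM -expnD subnKC.
have hx : vexp (alphab p alpha k' k) x = y ^+ (p ^ k').
  have [c Hc] := @rep k' k y yG yk.
  by rewrite /x Ey ?(leq_trans hjj (ltnW hjk)) //; apply: DL_spec (esym Hc).
pose t i := (p ^ (logn p #[alpha i] - k))%N.
pose V := vexp (fun i => alpha i ^+ t i) x.
have VG : V \in G by rewrite /V vexp_pow vexpG.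
have HV : forall a, V ^+ (p ^ a) = vexp (alphab p alpha a k) x.
  move=> a; rewrite /V vexp_pow vexp_exp /alphab vexp_pow; apply: eq_bigr => i _.
  by rewrite /qab expnD /t mulnC mulnA [(p ^ a * _)%N]mulnC.
have alG : forall a b i, alphab p alpha a b i \in G.
  by move=> a b i; rewrite /alphab groupX ?alphaG.
have HN : forall a b z, vexpN (alphab p alpha a b) z = (vexp (alphab p alpha a b) z)^-1.
  move=> a b z; rewrite /vexpN /vexp (@prod_inv _ G abG) //.
  by move=> i; rewrite groupX.
pose w := y * V^-1.
have wG : w \in G by rewrite groupM ?groupV.
have cyV : commute y V^-1 by apply: (@commG _ G abG); rewrite ?groupV.
have Hw : forall a, w ^+ (p ^ a) = y ^+ (p ^ a) * (vexp (alphab p alpha a k) x)^-1.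
  by move=> a; rewrite expgMn // expgVn HV.
have Hgam : gamma = w ^+ (p ^ j').
  by rewrite /gamma Hw Ey // HN.
have wk : w ^+ (p ^ k') = 1 by rewrite Hw hx mulgV.
split.
  by apply/imsetP; exists w => //; rewrite inE wG wk eqxx.
move=> v s i.
have hv : vexp (alphab p alpha j' k') v = gamma.
  have [c Hc] := @rep j' k' w wG wk.
  have Hc' : vexp (alphab p alpha j' k') c = gamma by rewrite Hgam Hc.
  by rewrite /v; exact: DL_spec Hc'.
set d := DL _ _.
have hd : vexp (alphab p alpha j' k) d = y ^+ (p ^ j').
  have [c Hc] := @rep j' k y yG yk.
  by rewrite /d Ey //; apply: DL_spec (esym Hc).
have E1 : y ^+ (p ^ j') = gamma * vexp (alphab p alpha j' k) x.
  by rewrite Hgam Hw mulgKV.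
move: E1; rewrite -hv -hd /alphab !vexp_pow vexp_mul => /esym E2.
have := @vexp_indep _ _ E2 i => /=.
have sq : (qab p alpha j' k' i = s i * qab p alpha j' k i)%N.
  rewrite /s divnK // /qab dvdn_exp2l // leq_add2l leq_sub2l //.
rewrite sq.
have -> : (s i * qab p alpha j' k i * v i + qab p alpha j' k i * x i
   = qab p alpha j' k i * (s i * v i + x i))%N by rewrite mulnDr mulnCA mulnA.
rewrite !expgM => E3.
by apply/eqP; rewrite -eq_expg_mod_order /alphab E3.
Qed.

End M.

Theorem lemma2 (gT : finGroupType) (p : nat) (G : {group gT}) (r : nat)
    (alpha : 'I_r -> gT) (j j' k' k : nat) (beta : gT) :
  prime p -> abelian G -> p.-group G ->
  <<[set alpha i | i : 'I_r]>> = G -> is_basis alpha ->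
  (j <= j')%N -> (j' < k')%N -> (k' <= k)%N ->
  beta \in Gab p j k G ->
  let x := DL (alphab p alpha k' k) (beta ^+ (p ^ (k' - j))%N) in
  let gamma := beta ^+ (p ^ (j' - j))%N * vexpN (alphab p alpha j' k) x in
  gamma \in Gab p j' k' G /\
  (let v := DL (alphab p alpha j' k') gamma in
   let s := fun i => (qab p alpha j' k' i %/ qab p alpha j' k i)%N in
   forall i : 'I_r,
     (s i * v i + x i = DL (alphab p alpha j' k) (beta ^+ (p ^ (j' - j))%N) i
       %[mod #[alphab p alpha j' k i]])%N).
Proof.
move=> pr abG pG HA bas.
exact: (@main gT G p r alpha pr abG pG HA bas j j' k' k beta).
Qed.
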